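(* Let $0<\gamma<1$ and let the coefficients $l_k^{2,\gamma}$ be defined by $\left((1-\zeta)+\tfrac12(1-\zeta)^2\right)^{\gamma}=\sum_{k=0}^\infty l_k^{2,\gamma}\zeta^k$ (equivalently $l_m^{2,\gamma}=(3/2)^{\gamma}\sum_{k=0}^{m}3^{-k}g_k^\gamma g_{m-k}^\gamma$ with $g_k^\gamma=(-1)^k\binom{\gamma}{k}$). Then $$g(\gamma,z)=\sum_{k=1}^\infty l_k^{2,\gamma}\left(\cos(kz)-1\right)\ge0\quad\text{for all } z\in[0,\pi].$$ *)

(* Defs.v *)
From Stdlib Require Import Reals.
From Coquelicot Require Import Coquelicot.
Open Scope R_scope.

Fixpoint gbinom (a : R) (k : nat) : R :=
  match k with
  | O => 1
  | S k' => gbinom a k' * (a - INR k') / INR (S k')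
  end.

Definition gcoef (gamma : R) (k : nat) : R := (-1) ^ k * gbinom gamma k.

(* l_m^{2,gamma} = (3/2)^gamma * sum_{k=0}^m 3^{-k} g_k^gamma g_{m-k}^gamma,
   the Taylor coefficients of ((1-z) + (1-z)^2/2)^gamma. *)
Definition l2coef (gamma : R) (m : nat) : R :=
  Rpower (3 / 2) gamma *
  sum_f_R0 (fun k => / 3 ^ k * gcoef gamma k * gcoef gamma (m - k)) m.

(* The k-th term (k >= 1) of g(gamma, z) = sum_{k>=1} l_k (cos(kz) - 1),
   reindexed from 0. *)
Definition gterm (gamma z : R) (n : nat) : R :=
  l2coef gamma (S n) * (cos (INR (S n) * z) - 1).

(* Main.v *)
Require Import Defs.
From Stdlib Require Import Reals.
From Coquelicot Require Import Coquelicot.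
From Stdlib Require Import Lra Lia.
Open Scope R_scope.

Lemma gcoef_0 g : gcoef g 0 = 1.
Proof. unfold gcoef; simpl; ring. Qed.

Lemma gcoef_S g k : gcoef g (S k) = gcoef g k * (INR k - g) / INR (S k).
Proof.
  unfold gcoef. change (gbinom g (S k)) with (gbinom g k * (g - INR k) / INR (S k)).
  change ((-1) ^ S k) with (-1 * (-1) ^ k). unfold Rdiv. ring.
Qed.

Lemma gcoef_neg g k : 0 < g < 1 -> (1 <= k)%nat -> gcoef g k < 0.
Proof.
  intros Hg Hk. induction k as [|k IH]; [lia|].
  rewrite gcoef_S. destruct k as [|k].
  - rewrite gcoef_0. simpl. lra.
  - assert (H1 : gcoef g (S k) < 0) by (apply IH; lia).
    assert (H2 : 1 <= INR (S k)) by (apply (le_INR 1); lia).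
    assert (H3 : 0 < INR (S (S k))) by (apply lt_0_INR; lia).
    unfold Rdiv. apply Rmult_neg_pos; [|apply Rinv_0_lt_compat; lra].
    apply Rmult_neg_pos; lra.
Qed.

Lemma gsum g n : 0 < g < 1 ->
  sum_f_R0 (gcoef g) n = - INR (S n) * gcoef g (S n) / g.
Proof.
  intros Hg. induction n as [|n IH].
  - simpl sum_f_R0. rewrite gcoef_S, gcoef_0. simpl. field. lra.
  - simpl sum_f_R0. rewrite IH. rewrite (gcoef_S g (S n)).
    rewrite !S_INR. field. split; [|lra].
    pose proof (pos_INR n). lra.
Qed.

Lemma gabs_sum_eq g n : 0 < g < 1 ->
  sum_f_R0 (fun k => Rabs (gcoef g k)) n = 2 - sum_f_R0 (gcoef g) n.
Proof.
  intros Hg. induction n as [|n IH].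
  - simpl. rewrite gcoef_0. rewrite Rabs_R1. ring.
  - simpl sum_f_R0. rewrite IH. rewrite Rabs_left by (apply gcoef_neg; lia || lra). ring.
Qed.

Lemma gabs_sum_le g n : 0 < g < 1 ->
  sum_f_R0 (fun k => Rabs (gcoef g k)) n <= 2.
Proof.
  intros Hg. rewrite gabs_sum_eq by auto. rewrite gsum by auto.
  assert (gcoef g (S n) < 0) by (apply gcoef_neg; lia || lra).
  pose proof (pos_INR (S n)).
  assert (0 <= - INR (S n) * gcoef g (S n) / g).
  { unfold Rdiv. apply Rmult_le_pos; [nra| left; apply Rinv_0_lt_compat; lra]. }
  lra.
Qed.

Lemma ex_series_bounded (a : nat -> R) M :
  (forall n, 0 <= a n) -> (forall n, sum_f_R0 a n <= M) -> ex_series a.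
Proof.
  intros Ha HM.
  destruct (growing_cv (fun n => sum_f_R0 a n)) as [l Hl].
  - intro n. simpl. specialize (Ha (S n)). lra.
  - exists M. intros x [n ->]. apply HM.
  - exists l. apply is_series_Reals. exact Hl.
Qed.

Lemma gabs_ex g : 0 < g < 1 -> ex_series (fun k => Rabs (gcoef g k)).
Proof.
  intros Hg. apply ex_series_bounded with 2.
  - intros; apply Rabs_pos.
  - intros; apply gabs_sum_le; auto.
Qed.


Definition ee g al k := al ^ k * gcoef g k.
Definition aC g al z k := ee g al k * cos (INR k * z).
Definition aS g al z k := ee g al k * sin (INR k * z).

Lemma cos_S k z : cos (INR (S k) * z) = cos z * cos (INR k * z) - sin z * sin (INR k * z).
Proof. rewrite S_INR. replace ((INR k + 1) * z) with (z + INR k * z) by ring. apply cos_plus. Qed.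
Lemma sin_S k z : sin (INR (S k) * z) = sin z * cos (INR k * z) + cos z * sin (INR k * z).
Proof. rewrite S_INR. replace ((INR k + 1) * z) with (z + INR k * z) by ring. apply sin_plus. Qed.

Lemma pow_le1 x n : 0 <= x <= 1 -> 0 <= x ^ n <= 1.
Proof.
  intros H. induction n; simpl; [lra|]. split; [apply Rmult_le_pos; lra|].
  rewrite <- (Rmult_1_l 1). apply Rmult_le_compat; lra.
Qed.

Lemma ee_abs g al k : 0 <= al <= 1 -> Rabs (ee g al k) <= Rabs (gcoef g k).
Proof.
  intros Ha. unfold ee. rewrite Rabs_mult. rewrite <- (Rmult_1_l (Rabs (gcoef g k))) at 2.
  apply Rmult_le_compat_r; [apply Rabs_pos|].
  pose proof (pow_le1 al k Ha). rewrite Rabs_pos_eq; lra.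
Qed.

Lemma rad_ge1 (c : nat -> R) g : 0 < g < 1 ->
  (forall k, Rabs (c k) <= Rabs (gcoef g k)) -> Rbar_le 1 (CV_radius c).
Proof.
  intros Hg Hc. apply (proj1 (Lub_Rbar_correct (CV_disk c))).
  unfold CV_disk. apply (@ex_series_le R_AbsRing R_CompleteNormedModule _ (fun k => Rabs (gcoef g k))).
  - intros n. rewrite pow1, Rmult_1_r. change (norm (Rabs (c n))) with (Rabs (Rabs (c n))).
    rewrite Rabs_Rabsolu. apply Hc.
  - apply gabs_ex; auto.
Qed.

Lemma inside (c : nat -> R) g r : 0 < g < 1 -> Rabs r < 1 ->
  (forall k, Rabs (c k) <= Rabs (gcoef g k)) -> Rbar_lt (Rabs r) (CV_radius c).
Proof.
  intros Hg Hr Hc. apply Rbar_lt_le_trans with 1; [exact Hr|]. apply (rad_ge1 c g); auto.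
Qed.

Lemma aC_abs g al z k : 0 <= al <= 1 -> Rabs (aC g al z k) <= Rabs (gcoef g k).
Proof.
  intros Ha. unfold aC. rewrite Rabs_mult. rewrite <- (Rmult_1_r (Rabs (gcoef g k))).
  apply Rmult_le_compat; try apply Rabs_pos. apply ee_abs; auto. apply Rabs_le, COS_bound.
Qed.
Lemma aS_abs g al z k : 0 <= al <= 1 -> Rabs (aS g al z k) <= Rabs (gcoef g k).
Proof.
  intros Ha. unfold aS. rewrite Rabs_mult. rewrite <- (Rmult_1_r (Rabs (gcoef g k))).
  apply Rmult_le_compat; try apply Rabs_pos. apply ee_abs; auto. apply Rabs_le, SIN_bound.
Qed.

Lemma lin5 (u1 u2 u3 u4 u5 : nat -> R) l1 l2 l3 l4 l5 k2 k3 k4 k5 :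
  is_series u1 l1 -> is_series u2 l2 -> is_series u3 l3 -> is_series u4 l4 -> is_series u5 l5 ->
  (forall n, u1 n + k2 * u2 n + k3 * u3 n + k4 * u4 n + k5 * u5 n = 0) ->
  l1 + k2 * l2 + k3 * l3 + k4 * l4 + k5 * l5 = 0.
Proof.
  intros H1 H2 H3 H4 H5 H.
  pose proof (is_series_scal k2 _ _ H2) as H2'.
  pose proof (is_series_scal k3 _ _ H3) as H3'.
  pose proof (is_series_scal k4 _ _ H4) as H4'.
  pose proof (is_series_scal k5 _ _ H5) as H5'.
  pose proof (is_series_plus _ _ _ _ (is_series_plus _ _ _ _ (is_series_plus _ _ _ _
     (is_series_plus _ _ _ _ H1 H2') H3') H4') H5') as HS.
  apply is_series_unique in HS. etransitivity; [exact (eq_sym HS)|].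
  rewrite (Series_ext _ (fun _ => 0 * 0)). rewrite Series_scal_l; ring.
  intros n. rewrite Rmult_0_r, <- (H n). reflexivity.
Qed.


Lemma ser_facts (A : nat -> R) g r : 0 < g < 1 -> Rabs r < 1 ->
  (forall k, Rabs (A k) <= Rabs (gcoef g k)) ->
  is_series (fun n => PS_derive A n * r ^ n) (PSeries (PS_derive A) r) /\
  is_series (fun n => PS_incr_1 (PS_derive A) n * r ^ n) (r * PSeries (PS_derive A) r) /\
  is_series (fun n => A n * r ^ n) (PSeries A r).
Proof.
  intros Hg Hr HA. pose proof (inside A g r Hg Hr HA) as Hin.
  pose proof (PSeries_correct _ _ (ex_pseries_derive _ _ Hin)) as H1.
  pose proof (is_pseries_incr_1 _ _ _ H1) as H2.
  pose proof (PSeries_correct _ _ (CV_radius_inside _ _ Hin)) as H3.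
  apply is_pseries_R in H1. apply is_pseries_R in H2. apply is_pseries_R in H3.
  split; [exact H1|split; [exact H2|exact H3]].
Qed.

Lemma ee_S g al k : ee g al (S k) = al * ee g al k * (INR k - g) / INR (S k).
Proof. unfold ee. rewrite gcoef_S. simpl pow. unfold Rdiv. ring. Qed.

Lemma ee_0 g al : ee g al 0 = 1.
Proof. unfold ee. rewrite gcoef_0. simpl. ring. Qed.
Lemma ee_1 g al : ee g al 1 = - al * g.
Proof. rewrite ee_S, ee_0. simpl. field. Qed.

Lemma ode1 g al z r : 0 < g < 1 -> 0 <= al <= 1 -> Rabs r < 1 ->
  let A := aC g al z in let B := aS g al z in
  PSeries (PS_derive A) r - al * cos z * (r * PSeries (PS_derive A) r)
  + al * sin z * (r * PSeries (PS_derive B) r)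
  + g * al * cos z * PSeries A r - g * al * sin z * PSeries B r = 0.
Proof.
  intros Hg Ha Hr A B.
  destruct (ser_facts A g r Hg Hr (fun k => aC_abs g al z k Ha)) as [H1 [H2 H4]].
  destruct (ser_facts B g r Hg Hr (fun k => aS_abs g al z k Ha)) as [_ [H3 H5]].
  replace (PSeries (PS_derive A) r - al * cos z * (r * PSeries (PS_derive A) r)
  + al * sin z * (r * PSeries (PS_derive B) r)
  + g * al * cos z * PSeries A r - g * al * sin z * PSeries B r) with
   (PSeries (PS_derive A) r + (- (al * cos z)) * (r * PSeries (PS_derive A) r)
  + (al * sin z) * (r * PSeries (PS_derive B) r)
  + (g * al * cos z) * PSeries A r + (- (g * al * sin z)) * PSeries B r) by ring.
  apply (lin5 _ _ _ _ _ _ _ _ _ _ _ _ _ _ H1 H2 H3 H4 H5).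
  intros [|m]; unfold PS_derive, A, B, aC, aS.
  - cbn [PS_incr_1]. change (zero : R) with 0. rewrite ee_1, ee_0.
    simpl INR. rewrite !Rmult_0_l, !sin_0, !cos_0. simpl pow. rewrite !Rmult_1_l. ring.
  - unfold PS_incr_1; cbv beta iota. rewrite (ee_S g al (S m)), (cos_S (S m)).
    assert (INR (S (S m)) <> 0) by (apply not_0_INR; lia).
    field. auto.
Qed.

Lemma ode2 g al z r : 0 < g < 1 -> 0 <= al <= 1 -> Rabs r < 1 ->
  let A := aC g al z in let B := aS g al z in
  PSeries (PS_derive B) r - al * cos z * (r * PSeries (PS_derive B) r)
  - al * sin z * (r * PSeries (PS_derive A) r)
  + g * al * cos z * PSeries B r + g * al * sin z * PSeries A r = 0.
Proof.
  intros Hg Ha Hr A B.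
  destruct (ser_facts A g r Hg Hr (fun k => aC_abs g al z k Ha)) as [_ [H3 H5]].
  destruct (ser_facts B g r Hg Hr (fun k => aS_abs g al z k Ha)) as [H1 [H2 H4]].
  replace (PSeries (PS_derive B) r - al * cos z * (r * PSeries (PS_derive B) r)
  - al * sin z * (r * PSeries (PS_derive A) r)
  + g * al * cos z * PSeries B r + g * al * sin z * PSeries A r) with
   (PSeries (PS_derive B) r + (- (al * cos z)) * (r * PSeries (PS_derive B) r)
  + (- (al * sin z)) * (r * PSeries (PS_derive A) r)
  + (g * al * cos z) * PSeries B r + (g * al * sin z) * PSeries A r) by ring.
  apply (lin5 _ _ _ _ _ _ _ _ _ _ _ _ _ _ H1 H2 H3 H4 H5).
  intros [|m]; unfold PS_derive, A, B, aC, aS.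
  - cbn [PS_incr_1]. change (zero : R) with 0. rewrite ee_1, ee_0.
    simpl INR. rewrite !Rmult_0_l, !sin_0, !cos_0. simpl pow. rewrite !Rmult_1_l. ring.
  - unfold PS_incr_1; cbv beta iota. rewrite (ee_S g al (S m)), (sin_S (S m)).
    assert (INR (S (S m)) <> 0) by (apply not_0_INR; lia).
    field. auto.
Qed.


Definition Xf al z r := 1 - al * r * cos z.
Definition Yf al z r := - (al * r * sin z).
Definition Qf al z r := Xf al z r * Xf al z r + Yf al z r * Yf al z r.

Lemma Xf_der al z r : is_derive (Xf al z) r (- (al * cos z)).
Proof. unfold Xf. auto_derive; auto. ring. Qed.
Lemma Yf_der al z r : is_derive (Yf al z) r (- (al * sin z)).
Proof. unfold Yf. auto_derive; auto. ring. Qed.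

Lemma Xf_pos al z r : 0 <= al <= 1 -> Rabs r < 1 -> 0 < Xf al z r.
Proof.
  intros Ha Hr. unfold Xf. pose proof (COS_bound z).
  assert (Rabs (al * r * cos z) < 1).
  { rewrite !Rabs_mult. assert (Rabs (cos z) <= 1) by (apply Rabs_le; lra).
    assert (Rabs al <= 1) by (rewrite Rabs_pos_eq; lra).
    pose proof (Rabs_pos al). pose proof (Rabs_pos r). pose proof (Rabs_pos (cos z)).
    apply Rle_lt_trans with (1 * Rabs r * 1); [|lra].
    apply Rmult_le_compat; try nra. }
  apply Rabs_def2 in H0. lra.
Qed.

Definition Uf g al z r :=
  exp (- g / 2 * ln (Xf al z r * Xf al z r + Yf al z r * Yf al z r)) *
  cos (g * atan (Yf al z r / Xf al z r)) * PSeries (aC g al z) r +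
  exp (- g / 2 * ln (Xf al z r * Xf al z r + Yf al z r * Yf al z r)) *
  sin (g * atan (Yf al z r / Xf al z r)) * PSeries (aS g al z) r.

Definition Vf g al z r :=
  exp (- g / 2 * ln (Xf al z r * Xf al z r + Yf al z r * Yf al z r)) *
  cos (g * atan (Yf al z r / Xf al z r)) * PSeries (aS g al z) r -
  exp (- g / 2 * ln (Xf al z r * Xf al z r + Yf al z r * Yf al z r)) *
  sin (g * atan (Yf al z r / Xf al z r)) * PSeries (aC g al z) r.

Lemma Uf_der g al z r : 0 < g < 1 -> 0 <= al <= 1 -> Rabs r < 1 ->
  is_derive (Uf g al z) r 0.
Proof.
  intros Hg Ha Hr. pose proof (Xf_pos al z r Ha Hr) as HX.
  pose proof (inside _ g r Hg Hr (fun k => aC_abs g al z k Ha)) as HA.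
  pose proof (inside _ g r Hg Hr (fun k => aS_abs g al z k Ha)) as HB.
  pose proof (ode1 g al z r Hg Ha Hr) as O1. pose proof (ode2 g al z r Hg Ha Hr) as O2.
  simpl in O1, O2.
  unfold Uf. auto_derive.
  - assert (eX : ex_derive (fun x => Xf al z x) r) by (eexists; apply Xf_der).
    assert (eY : ex_derive (fun x => Yf al z x) r) by (eexists; apply Yf_der).
    assert (eA : ex_derive (fun x => PSeries (aC g al z) x) r) by (apply ex_derive_PSeries; assumption).
    assert (eB : ex_derive (fun x => PSeries (aS g al z) x) r) by (apply ex_derive_PSeries; assumption).
    assert (HQ : 0 < Xf al z r * Xf al z r + Yf al z r * Yf al z r).
    { pose proof (Rle_0_sqr (Yf al z r)). unfold Rsqr in H. nra. }
    repeat match goal with |- _ /\ _ => split end; try assumption; try exact I; lra.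
  - set (E := exp _). set (C := cos (g * _)). set (Sn := sin (g * _)).
    replace (Derive (fun x => Xf al z x) r) with (-(al*cos z)) by (symmetry; apply is_derive_unique, Xf_der).
    replace (Derive (fun x => Yf al z x) r) with (-(al*sin z)) by (symmetry; apply is_derive_unique, Yf_der).
    replace (Derive (fun x => PSeries (aC g al z) x) r) with (PSeries (PS_derive (aC g al z)) r) by (symmetry; apply Derive_PSeries; auto).
    replace (Derive (fun x => PSeries (aS g al z) x) r) with (PSeries (PS_derive (aS g al z)) r) by (symmetry; apply Derive_PSeries; auto).
    set (Da := PSeries (PS_derive (aC g al z)) r) in *.
    set (Db := PSeries (PS_derive (aS g al z)) r) in *.
    set (Sa := PSeries (aC g al z) r) in *.
    set (Sb := PSeries (aS g al z) r) in *.
    assert (HQ : 0 < Xf al z r * Xf al z r + Yf al z r * Yf al z r).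
    { pose proof (Rle_0_sqr (Yf al z r)). unfold Rsqr in H. nra. }
    set (X := Xf al z r) in *. set (Y := Yf al z r) in *.
    assert (eX : X = 1 - al * r * cos z) by reflexivity.
    assert (eY : Y = - (al * r * sin z)) by reflexivity.
    assert (K1 : X * Da - Y * Db = - g * al * (cos z * Sa - sin z * Sb)) by (rewrite eX, eY; lra).
    assert (K2 : X * Db + Y * Da = - g * al * (cos z * Sb + sin z * Sa)) by (rewrite eX, eY; lra).
    clearbody Da Db Sa Sb X Y E C Sn. clear O1 O2.
    assert (eDa : Da = (X * (- g * al * (cos z * Sa - sin z * Sb)) + Y * (- g * al * (cos z * Sb + sin z * Sa))) / (X*X+Y*Y)).
    { rewrite <- K1, <- K2. field. lra. }
    assert (eDb : Db = (X * (- g * al * (cos z * Sb + sin z * Sa)) - Y * (- g * al * (cos z * Sa - sin z * Sb))) / (X*X+Y*Y)).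
    { rewrite <- K1, <- K2. field. lra. }
    rewrite eDa, eDb. rewrite eX, eY in *. field. split; lra.
Qed.

Lemma Vf_der g al z r : 0 < g < 1 -> 0 <= al <= 1 -> Rabs r < 1 ->
  is_derive (Vf g al z) r 0.
Proof.
  intros Hg Ha Hr. pose proof (Xf_pos al z r Ha Hr) as HX.
  pose proof (inside _ g r Hg Hr (fun k => aC_abs g al z k Ha)) as HA.
  pose proof (inside _ g r Hg Hr (fun k => aS_abs g al z k Ha)) as HB.
  pose proof (ode1 g al z r Hg Ha Hr) as O1. pose proof (ode2 g al z r Hg Ha Hr) as O2.
  simpl in O1, O2.
  unfold Vf. auto_derive.
  - assert (eX : ex_derive (fun x => Xf al z x) r) by (eexists; apply Xf_der).
    assert (eY : ex_derive (fun x => Yf al z x) r) by (eexists; apply Yf_der).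
    assert (eA : ex_derive (fun x => PSeries (aC g al z) x) r) by (apply ex_derive_PSeries; assumption).
    assert (eB : ex_derive (fun x => PSeries (aS g al z) x) r) by (apply ex_derive_PSeries; assumption).
    assert (HQ : 0 < Xf al z r * Xf al z r + Yf al z r * Yf al z r).
    { pose proof (Rle_0_sqr (Yf al z r)). unfold Rsqr in H. nra. }
    repeat match goal with |- _ /\ _ => split end; try assumption; try exact I; lra.
  - set (E := exp _). set (C := cos (g * _)). set (Sn := sin (g * _)).
    replace (Derive (fun x => Xf al z x) r) with (-(al*cos z)) by (symmetry; apply is_derive_unique, Xf_der).
    replace (Derive (fun x => Yf al z x) r) with (-(al*sin z)) by (symmetry; apply is_derive_unique, Yf_der).
    replace (Derive (fun x => PSeries (aC g al z) x) r) with (PSeries (PS_derive (aC g al z)) r) by (symmetry; apply Derive_PSeries; auto).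
    replace (Derive (fun x => PSeries (aS g al z) x) r) with (PSeries (PS_derive (aS g al z)) r) by (symmetry; apply Derive_PSeries; auto).
    set (Da := PSeries (PS_derive (aC g al z)) r) in *.
    set (Db := PSeries (PS_derive (aS g al z)) r) in *.
    set (Sa := PSeries (aC g al z) r) in *.
    set (Sb := PSeries (aS g al z) r) in *.
    assert (HQ : 0 < Xf al z r * Xf al z r + Yf al z r * Yf al z r).
    { pose proof (Rle_0_sqr (Yf al z r)). unfold Rsqr in H. nra. }
    set (X := Xf al z r) in *. set (Y := Yf al z r) in *.
    assert (eX : X = 1 - al * r * cos z) by reflexivity.
    assert (eY : Y = - (al * r * sin z)) by reflexivity.
    assert (K1 : X * Da - Y * Db = - g * al * (cos z * Sa - sin z * Sb)) by (rewrite eX, eY; lra).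
    assert (K2 : X * Db + Y * Da = - g * al * (cos z * Sb + sin z * Sa)) by (rewrite eX, eY; lra).
    clearbody Da Db Sa Sb X Y E C Sn. clear O1 O2.
    assert (eDa : Da = (X * (- g * al * (cos z * Sa - sin z * Sb)) + Y * (- g * al * (cos z * Sb + sin z * Sa))) / (X*X+Y*Y)).
    { rewrite <- K1, <- K2. field. lra. }
    assert (eDb : Db = (X * (- g * al * (cos z * Sb + sin z * Sa)) - Y * (- g * al * (cos z * Sa - sin z * Sb))) / (X*X+Y*Y)).
    { rewrite <- K1, <- K2. field. lra. }
    rewrite eDa, eDb. rewrite eX, eY in *. field. split; lra.
Qed.


Lemma UV_0 g al z : Uf g al z 0 = 1 /\ Vf g al z 0 = 0.
Proof.
  unfold Uf, Vf, Xf, Yf. rewrite !PSeries_0. unfold aC, aS. rewrite ee_0.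
  replace (- (al * 0 * sin z) / (1 - al * 0 * cos z)) with 0 by (field; lra).
  replace ((1 - al * 0 * cos z) * (1 - al * 0 * cos z) + - (al * 0 * sin z) * - (al * 0 * sin z)) with 1 by ring.
  rewrite ln_1, atan_0. simpl INR. rewrite !Rmult_0_l, !Rmult_0_r, exp_0, cos_0, sin_0. split; ring.
Qed.

Lemma UV_const g al z r : 0 < g < 1 -> 0 <= al <= 1 -> 0 <= r < 1 ->
  Uf g al z r = 1 /\ Vf g al z r = 0.
Proof.
  intros Hg Ha Hr. destruct (UV_0 g al z) as [U0 V0].
  destruct (Req_dec r 0) as [->|Hr0]; [auto|].
  split.
  - rewrite <- U0. symmetry. apply eq_is_derive; [|lra].
    intros t Ht. apply Uf_der; auto. apply Rabs_def1; lra.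
  - rewrite <- V0. symmetry. apply eq_is_derive; [|lra].
    intros t Ht. apply Vf_der; auto. apply Rabs_def1; lra.
Qed.

Lemma factor g al z r : 0 < g < 1 -> 0 <= al <= 1 -> 0 <= r < 1 ->
  PSeries (aC g al z) r = exp (g / 2 * ln (Qf al z r)) * cos (g * atan (Yf al z r / Xf al z r)) /\
  PSeries (aS g al z) r = exp (g / 2 * ln (Qf al z r)) * sin (g * atan (Yf al z r / Xf al z r)).
Proof.
  intros Hg Ha Hr. destruct (UV_const g al z r Hg Ha Hr) as [HU HV].
  unfold Uf, Vf in HU, HV. unfold Qf.
  set (E := exp (- g / 2 * _)) in *. set (E' := exp (g / 2 * _)).
  set (C := cos _) in *. set (Sn := sin _) in *.
  assert (EE : E' * E = 1).
  { unfold E, E'. rewrite <- exp_plus. replace (g / 2 * ln (Xf al z r * Xf al z r + Yf al z r * Yf al z r) +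
     - g / 2 * ln (Xf al z r * Xf al z r + Yf al z r * Yf al z r)) with 0 by field. apply exp_0. }
  assert (CS : C * C + Sn * Sn = 1).
  { unfold C, Sn. rewrite Rplus_comm. pose proof (sin2_cos2 (g * atan (Yf al z r / Xf al z r))). unfold Rsqr in H. exact H. }
  split.
  - transitivity (E' * (C * (E * C * PSeries (aC g al z) r + E * Sn * PSeries (aS g al z) r)
       - Sn * (E * C * PSeries (aS g al z) r - E * Sn * PSeries (aC g al z) r))).
    + transitivity ((E' * E) * (C * C + Sn * Sn) * PSeries (aC g al z) r); [rewrite EE, CS; ring| ring].
    + rewrite HU, HV. ring.
  - transitivity (E' * (Sn * (E * C * PSeries (aC g al z) r + E * Sn * PSeries (aS g al z) r)
       + C * (E * C * PSeries (aS g al z) r - E * Sn * PSeries (aC g al z) r))).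
    + transitivity ((E' * E) * (C * C + Sn * Sn) * PSeries (aS g al z) r); [rewrite EE, CS; ring| ring].
    + rewrite HU, HV. ring.
Qed.


Lemma ps_series (A : nat -> R) g r : 0 < g < 1 -> Rabs r < 1 ->
  (forall k, Rabs (A k) <= Rabs (gcoef g k)) ->
  is_series (fun n => A n * r ^ n) (PSeries A r) /\
  ex_series (fun n => Rabs (A n * r ^ n)).
Proof.
  intros Hg Hr HA. pose proof (inside A g r Hg Hr HA) as Hin. split.
  - apply is_pseries_R. apply PSeries_correct, CV_radius_inside; auto.
  - apply CV_disk_inside; auto.
Qed.

Lemma third : 0 <= / 3 <= 1.
Proof. split; [left; apply Rinv_0_lt_compat; lra|]. rewrite <- Rinv_1. apply Rinv_le_contravar; lra. Qed.
Lemma one01 : 0 <= 1 <= 1.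
Proof. lra. Qed.

Lemma lseries g z r : 0 < g < 1 -> Rabs r < 1 ->
  is_series (fun n => l2coef g n * r ^ n * cos (INR n * z))
   (Rpower (3/2) g * (PSeries (aC g (/3) z) r * PSeries (aC g 1 z) r -
                      PSeries (aS g (/3) z) r * PSeries (aS g 1 z) r)).
Proof.
  intros Hg Hr.
  destruct (ps_series _ g r Hg Hr (fun k => aC_abs g (/3) z k third)) as [H1 A1].
  destruct (ps_series _ g r Hg Hr (fun k => aC_abs g 1 z k one01)) as [H2 A2].
  destruct (ps_series _ g r Hg Hr (fun k => aS_abs g (/3) z k third)) as [H3 A3].
  destruct (ps_series _ g r Hg Hr (fun k => aS_abs g 1 z k one01)) as [H4 A4].
  pose proof (is_series_mult _ _ _ _ H1 H2 A1 A2) as M1.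
  pose proof (is_series_mult _ _ _ _ H3 H4 A3 A4) as M2.
  pose proof (is_series_scal (Rpower (3/2) g) _ _ (is_series_minus _ _ _ _ M1 M2)) as M.
  eapply is_series_ext; [|exact M].
  intros n. change (Rpower (3 / 2) g * (sum_f_R0 (fun k => aC g (/ 3) z k * r ^ k * (aC g 1 z (n - k) * r ^ (n - k))) n
     + - sum_f_R0 (fun k => aS g (/ 3) z k * r ^ k * (aS g 1 z (n - k) * r ^ (n - k))) n)
    = l2coef g n * r ^ n * cos (INR n * z)).
  unfold l2coef. rewrite Rmult_assoc, Rmult_assoc. f_equal.
  rewrite <- Rminus_def, <- minus_sum, (Rmult_comm (sum_f_R0 _ n)), scal_sum. apply sum_eq. intros k Hk.
  unfold aC, aS, ee. rewrite pow1, !Rmult_1_l, pow_inv.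
  replace (r ^ n) with (r ^ k * r ^ (n - k)) by (rewrite <- pow_add; f_equal; lia).
  replace (cos (INR n * z)) with (cos (INR k * z + INR (n - k) * z)).
  - rewrite cos_plus. ring.
  - f_equal. rewrite minus_INR by auto. ring.
Qed.


Lemma atan_le x y : x <= y -> atan x <= atan y.
Proof. intros [H|H]; [left; apply atan_increasing; auto| subst; lra]. Qed.

Lemma atan_sum u v : u <= 0 -> v <= 0 -> u * v <= 1 -> - (PI / 2) <= atan u + atan v.
Proof.
  intros Hu Hv Huv. pose proof (atan_bound u). pose proof (atan_bound v).
  destruct Hv as [Hv|Hv].
  - assert (E : atan v = - (PI / 2) + atan (/ - v)).
    { rewrite atan_inv by lra. rewrite atan_opp. ring. }
    rewrite E. assert (atan u + atan (/ - v) >= 0).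
    { rewrite <- Ropp_inv_permute by lra. rewrite atan_opp.
      assert (u >= / v).
      { apply Rle_ge. apply (Rmult_le_reg_r (- v)); [lra|].
        replace (/ v * - v) with (-1) by (field; lra). nra. }
      pose proof (atan_le (/ v) u). lra. }
    lra.
  - subst. rewrite atan_0. lra.
Qed.

Lemma atan_nonpos x : x <= 0 -> atan x <= 0.
Proof. intros H. rewrite <- atan_0. apply atan_le; auto. Qed.

Lemma Fv_nonneg g z r : 0 < g < 1 -> 0 <= z <= PI -> 0 <= r < 1 ->
  0 <= Rpower (3/2) g * (PSeries (aC g (/3) z) r * PSeries (aC g 1 z) r -
                      PSeries (aS g (/3) z) r * PSeries (aS g 1 z) r).
Proof.
  intros Hg Hz Hr.
  destruct (factor g (/3) z r Hg third Hr) as [B1 B2].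
  destruct (factor g 1 z r Hg one01 Hr) as [A1 A2].
  rewrite B1, B2, A1, A2.
  set (EB := exp _). set (EA := exp (g / 2 * ln (Qf 1 z r))).
  set (u := Yf 1 z r / Xf 1 z r). set (v := Yf (/3) z r / Xf (/3) z r).
  replace (EB * cos (g * atan v) * (EA * cos (g * atan u)) - EB * sin (g * atan v) * (EA * sin (g * atan u)))
    with (EB * EA * cos (g * atan v + g * atan u)) by (rewrite cos_plus; ring).
  apply Rmult_le_pos; [left; apply exp_pos|].
  apply Rmult_le_pos; [left; apply Rmult_lt_0_compat; apply exp_pos|].
  assert (Hr' : Rabs r < 1) by (rewrite Rabs_pos_eq; lra).
  pose proof (Xf_pos 1 z r one01 Hr') as XA. pose proof (Xf_pos (/3) z r third Hr') as XB.
  pose proof (sin_ge_0 z (proj1 Hz) (proj2 Hz)) as Hs.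
  pose proof (sin2_cos2 z) as Hsc. unfold Rsqr in Hsc.
  assert (YA : Yf 1 z r <= 0) by (unfold Yf; nra).
  assert (YB : Yf (/3) z r <= 0) by (unfold Yf; pose proof third; nra).
  assert (Hu : u <= 0).
  { unfold u, Rdiv. apply Rmult_le_0_r; [auto| left; apply Rinv_0_lt_compat; auto]. }
  assert (Hv : v <= 0).
  { unfold v, Rdiv. apply Rmult_le_0_r; [auto| left; apply Rinv_0_lt_compat; auto]. }
  assert (Huv : u * v <= 1).
  { unfold u, v. assert (Yf 1 z r * Yf (/3) z r <= Xf 1 z r * Xf (/3) z r).
    { unfold Xf, Yf. pose proof (COS_bound z).
      assert (0 <= 2 * (r * cos z - 1) ^ 2 + 1 - r ^ 2).
      { assert (r * r <= 1) by nra. pose proof (pow2_ge_0 (r * cos z - 1)). nra. }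
      assert (E : (1 - 1 * r * cos z) * (1 - / 3 * r * cos z) - (- (1 * r * sin z)) * (- (/3 * r * sin z))
         = / 3 * (2 * (r * cos z - 1) ^ 2 + 1 - r ^ 2)).
      { replace (- (1 * r * sin z) * - (/ 3 * r * sin z)) with (/3 * r * r * (sin z * sin z)) by ring.
        replace (sin z * sin z) with (1 - cos z * cos z) by lra. field. }
      pose proof third. nra. }
    replace (Yf 1 z r / Xf 1 z r * (Yf (/ 3) z r / Xf (/ 3) z r)) with
      ((Yf 1 z r * Yf (/3) z r) / (Xf 1 z r * Xf (/ 3) z r)) by (field; lra).
    apply (Rmult_le_reg_r (Xf 1 z r * Xf (/ 3) z r)); [nra|].
    unfold Rdiv. rewrite Rmult_assoc, Rinv_l by nra. lra. }
  pose proof (atan_sum u v Hu Hv Huv).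
  pose proof (atan_nonpos u Hu). pose proof (atan_nonpos v Hv).
  apply cos_ge_0; nra.
Qed.


Lemma Series_zero : Series (fun _ => 0) = 0.
Proof. rewrite (Series_ext _ (fun _ => 0 * 0)) by (intros; ring). rewrite Series_scal_l. ring. Qed.

Lemma Series_nonneg (b : nat -> R) : (forall n, 0 <= b n) -> ex_series b -> 0 <= Series b.
Proof. intros H E. rewrite <- Series_zero. apply Series_le; auto. intros n; split; [lra|auto]. Qed.

Lemma bern r k : 0 <= r <= 1 -> 1 - r ^ k <= INR k * (1 - r).
Proof.
  intros Hr. induction k as [|k IH]; [simpl; lra|].
  rewrite S_INR. simpl pow. pose proof (pow_le r k (proj1 Hr)).
  assert (r ^ k <= 1).
  { clear IH. induction k; simpl; [lra|]. rewrite <- (Rmult_1_l 1). apply Rmult_le_compat; try lra.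
    apply pow_le; lra. }
  nra.
Qed.

Lemma pow_01 r k : 0 <= r <= 1 -> 0 <= r ^ k <= 1.
Proof.
  intros Hr. split; [apply pow_le; lra|]. induction k; simpl; [lra|].
  rewrite <- (Rmult_1_l 1). apply Rmult_le_compat; try lra. apply pow_le; lra.
Qed.

Lemma ex_abs_mult (c : nat -> R) r : ex_series (fun k => Rabs (c k)) -> 0 <= r <= 1 ->
  ex_series (fun k => Rabs (c k * r ^ k)).
Proof.
  intros Hc Hr. apply (@ex_series_le R_AbsRing R_CompleteNormedModule _ (fun k => Rabs (c k))); auto.
  intros n. change (norm (Rabs (c n * r ^ n))) with (Rabs (Rabs (c n * r ^ n))).
  rewrite Rabs_Rabsolu, Rabs_mult. pose proof (pow_01 r n Hr).
  rewrite (Rabs_pos_eq (r ^ n)) by lra. pose proof (Rabs_pos (c n)). nra.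
Qed.

Lemma abel_bound (c : nat -> R) r K : ex_series (fun k => Rabs (c k)) -> 0 <= r <= 1 ->
  Rabs (Series c - Series (fun k => c k * r ^ k)) <=
  Series (fun k => Rabs (c k)) * INR (S K) * (1 - r) +
  (Series (fun k => Rabs (c k)) - sum_f_R0 (fun k => Rabs (c k)) K).
Proof.
  intros Hc Hr.
  assert (Ec : ex_series c) by (apply ex_series_Rabs; auto).
  assert (Ecr : ex_series (fun k => c k * r ^ k)) by (apply ex_series_Rabs, ex_abs_mult; auto).
  set (d := fun k => Rabs (c k) * (1 - r ^ k)).
  assert (Hd : forall k, 0 <= d k <= Rabs (c k)).
  { intros k. unfold d. pose proof (pow_01 r k Hr). pose proof (Rabs_pos (c k)). split; nra. }
  assert (Ed : ex_series d).
  { apply (@ex_series_le R_AbsRing R_CompleteNormedModule _ (fun k => Rabs (c k))); auto.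
    intros n. change (norm (d n)) with (Rabs (d n)). rewrite Rabs_pos_eq; apply Hd. }
  rewrite <- Series_minus by auto.
  eapply Rle_trans.
  { apply Series_Rabs. apply (@ex_series_le R_AbsRing R_CompleteNormedModule _ d); auto.
    intros n. change (norm (Rabs (c n - c n * r ^ n))) with (Rabs (Rabs (c n - c n * r ^ n))).
    rewrite Rabs_Rabsolu. unfold d. replace (c n - c n * r ^ n) with (c n * (1 - r ^ n)) by ring.
    rewrite Rabs_mult. pose proof (pow_01 r n Hr). rewrite (Rabs_pos_eq (1 - r ^ n)) by lra. lra. }
  rewrite (Series_ext _ d).
  2:{ intros n. unfold d. replace (c n - c n * r ^ n) with (c n * (1 - r ^ n)) by ring.
      rewrite Rabs_mult. pose proof (pow_01 r n Hr). rewrite (Rabs_pos_eq (1 - r ^ n)) by lra. auto. }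
  rewrite (Series_incr_n d (S K)) by (lia || auto).
  rewrite (Series_incr_n (fun k => Rabs (c k)) (S K)) by (lia || auto).
  simpl Init.Nat.pred.
  assert (T : Series (fun k => d (S K + k)%nat) <= Series (fun k => Rabs (c (S K + k)%nat))).
  { apply Series_le. intros n; apply Hd. apply (ex_series_incr_n (fun k => Rabs (c k))). auto. }
  assert (P : sum_f_R0 d K <= sum_f_R0 (fun k => Rabs (c k)) K * (INR (S K) * (1 - r))).
  { rewrite Rmult_comm, scal_sum. apply sum_Rle. intros k Hk. unfold d. pose proof (Rabs_pos (c k)).
    apply Rmult_le_compat_l; auto. eapply Rle_trans; [apply bern; auto|].
    apply Rmult_le_compat_r; [lra|]. apply le_INR. lia. }
  assert (T0 : 0 <= Series (fun k => Rabs (c (S K + k)%nat))).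
  { apply Series_nonneg. intros; apply Rabs_pos. apply (ex_series_incr_n (fun k => Rabs (c k))). auto. }
  assert (0 <= INR (S K) * (1 - r)) by (pose proof (pos_INR (S K)); nra).
  nra.
Qed.

Lemma abel (c rn : nat -> R) : ex_series (fun k => Rabs (c k)) -> (forall n, 0 <= rn n <= 1) ->
  is_lim_seq rn 1 -> is_lim_seq (fun n => Series (fun k => c k * rn n ^ k)) (Series c).
Proof.
  intros Hc Hrn Hl. apply is_lim_seq_spec. intros eps.
  set (M := Series (fun k => Rabs (c k))).
  assert (HM : 0 <= M) by (apply Series_nonneg; auto; intros; apply Rabs_pos).
  assert (Hs : infinite_sum (fun k => Rabs (c k)) M) by (apply is_series_Reals, Series_correct; auto).
  destruct (Hs (eps / 2)) as [N0 HN0]; [destruct eps; simpl; lra|].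
  specialize (HN0 N0 (le_n _)). unfold Rdist in HN0. apply Rabs_def2 in HN0.
  set (K := INR (S N0)) in *.
  assert (HK : 0 < K) by (apply lt_0_INR; lia).
  assert (Hd : 0 < eps / (2 * (M * K + 1))).
  { destruct eps as [e He]; simpl. apply Rdiv_lt_0_compat; [lra|]. nra. }
  apply is_lim_seq_spec in Hl. destruct (Hl (mkposreal _ Hd)) as [N1 HN1].
  exists N1. intros n Hn. specialize (HN1 n Hn). simpl in HN1. apply Rabs_def2 in HN1.
  rewrite Rabs_minus_sym. eapply Rle_lt_trans; [apply (abel_bound c (rn n) N0); auto|].
  fold M. fold K.
  assert (M * K * (1 - rn n) <= M * K * (eps / (2 * (M * K + 1)))).
  { apply Rmult_le_compat_l; [nra|lra]. }
  assert (M * K * (eps / (2 * (M * K + 1))) < eps / 2).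
  { destruct eps as [e He]; simpl in *. apply (Rmult_lt_reg_r (2 * (M * K + 1))); [nra|].
    field_simplify; [|nra]. nra. }
  lra.
Qed.


Lemma Rpower_pos x y : 0 < Rpower x y.
Proof. unfold Rpower. apply exp_pos. Qed.

Lemma l_abs g : 0 < g < 1 -> ex_series (fun n => Rabs (l2coef g n)).
Proof.
  intros Hg.
  set (a := fun k => Rabs (/ 3 ^ k * gcoef g k)).
  set (b := fun k => Rabs (gcoef g k)).
  assert (Hab : forall k, Rabs (a k) <= b k).
  { intros k. unfold a, b. rewrite Rabs_Rabsolu, <- pow_inv. apply (ee_abs g (/3) k third). }
  assert (Ha : ex_series (fun k => Rabs (a k))).
  { apply (@ex_series_le R_AbsRing R_CompleteNormedModule _ b).
    - intros n. change (norm (Rabs (a n))) with (Rabs (Rabs (a n))). rewrite Rabs_Rabsolu. auto.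
    - apply gabs_ex; auto. }
  assert (Hb : ex_series (fun k => Rabs (b k))).
  { unfold b. eapply ex_series_ext; [|apply gabs_ex; eauto]. intros; simpl. rewrite Rabs_Rabsolu; auto. }
  pose proof (is_series_mult _ _ _ _ (Series_correct _ (ex_series_Rabs _ Ha))
                 (Series_correct _ (ex_series_Rabs _ Hb)) Ha Hb) as M.
  apply (@ex_series_le R_AbsRing R_CompleteNormedModule _
     (fun n => Rpower (3/2) g * sum_f_R0 (fun k => a k * b (n - k)%nat) n)).
  - intros n. change (norm (Rabs (l2coef g n))) with (Rabs (Rabs (l2coef g n))). rewrite Rabs_Rabsolu.
    unfold l2coef. rewrite Rabs_mult, (Rabs_pos_eq (Rpower _ _)) by (left; apply Rpower_pos).
    apply Rmult_le_compat_l; [left; apply Rpower_pos|].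
    eapply Rle_trans; [apply sum_f_R0_triangle|]. right. apply sum_eq. intros k Hk.
    unfold a, b. rewrite Rabs_mult. reflexivity.
  - eexists. apply (is_series_scal (Rpower (3/2) g) _ _ M).
Qed.

Definition Fv g z r := Rpower (3/2) g * (PSeries (aC g (/3) z) r * PSeries (aC g 1 z) r -
                      PSeries (aS g (/3) z) r * PSeries (aS g 1 z) r).

Lemma exp_le1 x : x <= 0 -> exp x <= 1.
Proof. intros [H|H]; [left; rewrite <- exp_0; apply exp_increasing; auto| subst; rewrite exp_0; lra]. Qed.
Lemma ln_le0 x : 0 < x <= 1 -> ln x <= 0.
Proof. intros [H [H1|H1]]; [left; rewrite <- ln_1; apply ln_increasing; auto| subst; rewrite ln_1; lra]. Qed.

Lemma exp_n a n : exp (INR n * a) = exp a ^ n.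
Proof.
  induction n as [|n IH]; [simpl; rewrite Rmult_0_l; apply exp_0|].
  rewrite S_INR. replace ((INR n + 1) * a) with (INR n * a + a) by ring. rewrite exp_plus, IH. simpl. ring.
Qed.

Lemma Yf0 al r : Yf al 0 r / Xf al 0 r = 0.
Proof. unfold Yf. rewrite sin_0. unfold Rdiv. ring. Qed.

Lemma F0_eq g r : 0 < g < 1 -> 0 <= r < 1 ->
  Fv g 0 r = Rpower (3/2) g * exp (g / 2 * ln (Qf (/3) 0 r)) * exp (g / 2 * ln (Qf 1 0 r)).
Proof.
  intros Hg Hr. unfold Fv.
  destruct (factor g (/3) 0 r Hg third Hr) as [B1 B2].
  destruct (factor g 1 0 r Hg one01 Hr) as [A1 A2].
  rewrite B1, B2, A1, A2, !Yf0, atan_0, Rmult_0_r, cos_0, sin_0. ring.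
Qed.

Lemma F0_bounds g r : 0 < g < 1 -> 0 <= r < 1 ->
  0 <= Fv g 0 r <= Rpower (3/2) g * exp (g / 2 * ln (Qf 1 0 r)).
Proof.
  intros Hg Hr. rewrite F0_eq by auto.
  pose proof (Rpower_pos (3/2) g). pose proof (exp_pos (g / 2 * ln (Qf (/ 3) 0 r))).
  pose proof (exp_pos (g / 2 * ln (Qf 1 0 r))).
  assert (exp (g / 2 * ln (Qf (/ 3) 0 r)) <= 1).
  { apply exp_le1. assert (ln (Qf (/ 3) 0 r) <= 0).
    { apply ln_le0. unfold Qf, Xf, Yf. rewrite sin_0, cos_0.
      replace (- (/ 3 * r * 0) * - (/ 3 * r * 0)) with 0 by ring.
      replace (/3) with (1/3) by field. assert (0 < 1 - 1/3 * r * 1 <= 1) by lra. nra. }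
    nra. }
  assert (0 < Rpower (3/2) g * exp (g / 2 * ln (Qf 1 0 r))) by (apply Rmult_lt_0_compat; auto).
  split; [|nra]. left. apply Rmult_lt_0_compat; [apply Rmult_lt_0_compat|]; auto.
Qed.

Lemma EA_seq g n : 0 < g < 1 ->
  exp (g / 2 * ln (Qf 1 0 (1 - (/2) ^ n))) = Rpower (/2) g ^ n.
Proof.
  intros Hg. unfold Qf, Xf, Yf. rewrite sin_0, cos_0.
  replace ((1 - 1 * (1 - (/ 2) ^ n) * 1) * (1 - 1 * (1 - (/ 2) ^ n) * 1) +
    - (1 * (1 - (/ 2) ^ n) * 0) * - (1 * (1 - (/ 2) ^ n) * 0)) with ((/2) ^ n * (/2) ^ n) by ring.
  assert (0 < (/2) ^ n) by (apply pow_lt; lra).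
  rewrite ln_mult by auto. rewrite ln_pow by lra. unfold Rpower. rewrite <- exp_n. f_equal. field.
Qed.

Lemma EA_lim g : 0 < g < 1 -> is_lim_seq (fun n => Rpower (/2) g ^ n) 0.
Proof.
  intros Hg. apply is_lim_seq_geom. rewrite Rabs_pos_eq by (left; apply Rpower_pos).
  unfold Rpower. rewrite <- exp_0. apply exp_increasing.
  assert (ln (/2) < 0) by (rewrite <- ln_1; apply ln_increasing; lra). nra.
Qed.

Lemma Fv_series g z r : 0 < g < 1 -> 0 <= r < 1 ->
  Series (fun k => l2coef g k * (cos (INR k * z) - 1) * r ^ k) = Fv g z r - Fv g 0 r.
Proof.
  intros Hg Hr. assert (Hr' : Rabs r < 1) by (rewrite Rabs_pos_eq; lra).
  apply is_series_unique.
  pose proof (is_series_minus _ _ _ _ (lseries g z r Hg Hr') (lseries g 0 r Hg Hr')) as H.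
  eapply is_series_ext; [|exact H].
  intros k. change (l2coef g k * r ^ k * cos (INR k * z) + - (l2coef g k * r ^ k * cos (INR k * 0)) =
    l2coef g k * (cos (INR k * z) - 1) * r ^ k).
  rewrite Rmult_0_r, cos_0. ring.
Qed.

Theorem lemma3p6 (gamma z : R) :
  0 < gamma < 1 -> 0 <= z <= PI ->
  ex_series (gterm gamma z) /\ 0 <= Series (gterm gamma z).
Proof.
  intros Hg Hz.
  set (cc := fun k => l2coef gamma k * (cos (INR k * z) - 1)).
  assert (Hcc : ex_series (fun k => Rabs (cc k))).
  { apply (@ex_series_le R_AbsRing R_CompleteNormedModule _ (fun k => 2 * Rabs (l2coef gamma k))).
    - intros n. change (norm (Rabs (cc n))) with (Rabs (Rabs (cc n))). rewrite Rabs_Rabsolu.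
      unfold cc. rewrite Rabs_mult. pose proof (COS_bound (INR n * z)).
      assert (Rabs (cos (INR n * z) - 1) <= 2) by (apply Rabs_le; lra).
      pose proof (Rabs_pos (l2coef gamma n)). nra.
    - destruct (l_abs gamma Hg) as [l Hl]. eexists. apply (is_series_scal 2 _ _ Hl). }
  assert (Ec : ex_series cc) by (apply ex_series_Rabs; auto).
  assert (Eg : ex_series (gterm gamma z)) by (apply (ex_series_incr_1 cc); auto).
  split; [exact Eg|].
  assert (Ser : Series (gterm gamma z) = Series cc).
  { rewrite (Series_incr_1 cc Ec). unfold cc at 1. simpl INR. rewrite Rmult_0_l, cos_0.
    rewrite Rminus_diag, Rmult_0_r, Rplus_0_l. reflexivity. }
  rewrite Ser.
  set (rn := fun n : nat => 1 - (/2) ^ n).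
  assert (Hrn : forall n, 0 <= rn n < 1).
  { intros n. unfold rn. pose proof (pow_01 (/2) n). assert (0 < (/2) ^ n) by (apply pow_lt; lra).
    assert (0 <= /2 <= 1) by lra. specialize (H H1). lra. }
  assert (Lrn : is_lim_seq rn 1).
  { unfold rn. assert (Hq : Rabs (/2) < 1) by (rewrite Rabs_pos_eq; lra).
    pose proof (is_lim_seq_minus' _ _ _ _ (is_lim_seq_const 1) (is_lim_seq_geom (/2) Hq)) as H.
    rewrite Rminus_0_r in H. exact H. }
  pose proof (abel cc rn Hcc (fun n => conj (proj1 (Hrn n)) (Rlt_le _ _ (proj2 (Hrn n)))) Lrn) as AB.
  assert (L0 : is_lim_seq (fun n => Fv gamma 0 (rn n)) 0).
  { apply is_lim_seq_le_le with (u := fun _ => 0) (w := fun n => Rpower (3/2) gamma * Rpower (/2) gamma ^ n).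
    - intros n. rewrite <- EA_seq by auto. apply F0_bounds; [auto| apply Hrn].
    - apply is_lim_seq_const.
    - pose proof (is_lim_seq_mult' _ _ _ _ (is_lim_seq_const (Rpower (3/2) gamma)) (EA_lim gamma Hg)) as H.
      rewrite Rmult_0_r in H. exact H. }
  assert (L1 : is_lim_seq (fun n => - Fv gamma 0 (rn n)) 0).
  { replace (Finite 0) with (Rbar_opp 0) by (simpl; f_equal; ring). exact (proj1 (is_lim_seq_opp _ _) L0). }
  assert (LE : Rbar_le 0 (Series cc)).
  { refine (is_lim_seq_le _ _ _ _ _ L1 AB). intros n. simpl.
    unfold cc. rewrite (Fv_series gamma z (rn n) Hg (Hrn n)).
    pose proof (Fv_nonneg gamma z (rn n) Hg Hz (Hrn n)). unfold Fv. lra. }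
  simpl in LE. exact LE.
Qed.
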